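(* Let $K>0$, $K\neq 1$, and let \[ A_4=\begin{pmatrix} 1 & K & K\\ K & 1 & 1\\ K & 1 & 1\end{pmatrix}. \] Then \[ S(A_4)=\begin{pmatrix} a & b & b\\ b & c & c\\ b & c & c\end{pmatrix} \] with \[ a=\frac{-K^2-2+K\sqrt{K^2+8}}{2(K^2-1)},\qquad b=\frac{3K^2-K\sqrt{K^2+8}}{4(K^2-1)},\qquad c=\frac{K^2-4+K\sqrt{K^2+8}}{8(K^2-1)}, \] and \[ \lim_{K\to\infty}S(A_4)=\begin{pmatrix} 0 & 1/2 & 1/2\\ 1/2 & 1/4 & 1/4\\ 1/2 & 1/4 & 1/4\end{pmatrix}. \]
   Context: For a positive $n\times n$ matrix $A$, the Sinkhorn limit $S(A)$ is the unique doubly stochastic matrix of the form $XAY$ with $X,Y$ positive diagonal matrices; it is the limit of alternately row scaling (dividing each row by its row sum) and column scaling (dividing each column by its column sum) starting from $A$. For a positive symmetric matrix $A$ there is a unique positive diagonal $X$ with $S(A)=XAX$. *)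

(* Defs.v *)
From HB Require Import structures.
From mathcomp Require Import all_boot all_order all_algebra.
From mathcomp Require Import all_classical all_reals all_analysis.
Set Implicit Arguments. Unset Strict Implicit. Unset Printing Implicit Defensive.
Import Order.TTheory GRing.Theory Num.Theory.
Local Open Scope ring_scope.

Definition doubly_stochastic (R : realType) (n : nat) (M : 'M[R]_n) : Prop :=
  (forall i j, 0 <= M i j) /\
  (forall i, \sum_j M i j = 1) /\
  (forall j, \sum_i M i j = 1).

(* S is the Sinkhorn limit of A: S is doubly stochastic and S = X A Y
   with X, Y positive diagonal matrices. (The Sinkhorn limit of a positive
   matrix is the unique such S.) *)
Definition is_sinkhorn_limit (R : realType) (n : nat) (A S : 'M[R]_n) : Prop :=
  doubly_stochastic S /\
  exists x y : 'rV[R]_n,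
    (forall i, 0 < x 0 i) /\ (forall i, 0 < y 0 i) /\
    S = diag_mx x *m A *m diag_mx y.

Definition A4 (R : realType) (K : R) : 'M[R]_3 :=
  \matrix_(i < 3, j < 3)
    (if (i == 0 :> nat) && (j == 0 :> nat) then 1
     else if (i == 0 :> nat) || (j == 0 :> nat) then K else 1).

Definition abc_mx (R : realType) (a b c : R) : 'M[R]_3 :=
  \matrix_(i < 3, j < 3)
    (if (i == 0 :> nat) && (j == 0 :> nat) then a
     else if (i == 0 :> nat) || (j == 0 :> nat) then b else c).

Definition a_K (R : realType) (K : R) : R :=
  (- K ^+ 2 - 2 + K * Num.sqrt (K ^+ 2 + 8)) / (2 * (K ^+ 2 - 1)).
Definition b_K (R : realType) (K : R) : R :=
  (3 * K ^+ 2 - K * Num.sqrt (K ^+ 2 + 8)) / (4 * (K ^+ 2 - 1)).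
Definition c_K (R : realType) (K : R) : R :=
  (K ^+ 2 - 4 + K * Num.sqrt (K ^+ 2 + 8)) / (8 * (K ^+ 2 - 1)).

(* Main.v *)
Require Import Defs.
From HB Require Import structures.
From mathcomp Require Import all_boot all_order all_algebra.
From mathcomp Require Import all_classical all_reals all_analysis.
From mathcomp Require Import lra ring.
Import Order.TTheory GRing.Theory Num.Theory.
Import numFieldNormedType.Exports.
Local Open Scope ring_scope.

Section S.
Variable R : realType.

Definition tK (K : R) := Num.sqrt (K ^+ 2 + 8).
Definition beta (K : R) := 2 * K / (3 * K + tK K).

Lemma tK_sq K : tK K ^+ 2 = K ^+ 2 + 8.
Proof. rewrite /tK sqr_sqrtr //; by rewrite addr_ge0 // sqr_ge0. Qed.
Lemma tK_gt0 K : 0 < tK K.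
Proof. rewrite /tK sqrtr_gt0; have := sqr_ge0 K; lra. Qed.

Lemma abc_beta K : 0 < K -> K != 1 ->
  [/\ a_K K = 1 - 2 * beta K, b_K K = beta K & c_K K = (1 - beta K) / 2].
Proof.
move=> K0 K1.
have t2 := tK_sq K; have t0 := tK_gt0 K.
have hD : K ^+ 2 - 1 != 0.
  rewrite subr_eq0; apply/eqP => h; move/eqP: K1; apply.
  have : (K - 1) * (K + 1) = 0 by rewrite -subr_sqr expr1n h subrr.
  move/eqP; rewrite mulf_eq0 => /orP[]; rewrite ?subr_eq0 => /eqP //.
  move=> h'; exfalso; lra.
have hb : b_K K = beta K.
  rewrite /b_K /beta -/(tK K).
  apply/eqP; rewrite eqr_div //; last first. all: try (by rewrite mulf_neq0). all: try (by apply/eqP => h; lra).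


  rewrite -subr_eq0; apply/eqP.
  have -> : (3 * K ^+ 2 - K * tK K) * (3 * K + tK K) - 2 * K * (4 * (K ^+ 2 - 1))
     = - K * (tK K ^+ 2 - (K ^+2 + 8)) by ring.
  by rewrite t2 subrr mulr0.
split => //; rewrite -hb /a_K /b_K /c_K; field; rewrite ?hD //.
Qed.

Lemma beta_eq K : 0 < K -> beta K * (3 * K + tK K) = 2 * K.
Proof. move=> K0; have t0 := tK_gt0 K; rewrite /beta mulrAC -mulrA divff ?mulr1 //; apply/eqP => h; lra. Qed.

Lemma beta_bounds K : 0 < K -> 0 < beta K /\ beta K < 2^-1.
Proof.
move=> K0; have t0 := tK_gt0 K; have t2 := tK_sq K; have hb := beta_eq K K0.
have hKt : K < tK K by nra.
have b0 : 0 < beta K by rewrite /beta divr_gt0 //; lra.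
split => //; nra.
Qed.

Lemma beta_quad K : 0 < K -> K ^+ 2 * ((1 - 2 * beta K) * (1 - beta K)) = 2 * beta K ^+ 2.
Proof.
move=> K0; have t2 := tK_sq K; have hb := beta_eq K K0.
set b := beta K in hb *; set t := tK K in t2 hb *.
have : (b * (3 * K + t) - 2 * K) * (b * (3 * K - t) - 2 * K)
   = 4 * (K ^+ 2 * ((1 - 2 * b) * (1 - b)) - 2 * b ^+ 2) + b^+2 * (K ^+2 + 8 - t ^+ 2).
  ring.
rewrite hb subrr mul0r t2 subrr mulr0 addr0 => h.
apply/eqP; rewrite -subr_eq0; apply/eqP; apply: (@mulfI _ 4) => //; rewrite mulr0; exact/esym.
Qed.

Lemma quad_uniq K b : 0 < K -> 0 < b -> b < 2^-1 ->
  K ^+ 2 * ((1 - 2 * b) * (1 - b)) = 2 * b ^+ 2 -> b = beta K.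
Proof.
move=> K0 b0 b1 hq; have t2 := tK_sq K; have t0 := tK_gt0 K.
set t := tK K in t2 t0.
have : (b * (3 * K + t) - 2 * K) * (b * (3 * K - t) - 2 * K)
   = 4 * (K ^+ 2 * ((1 - 2 * b) * (1 - b)) - 2 * b ^+ 2) + b^+2 * (K ^+2 + 8 - t ^+ 2).
  ring.
rewrite hq subrr mulr0 t2 subrr mulr0 addr0 => /eqP; rewrite mulf_eq0 => /orP[] /eqP h.
  rewrite /beta -/t; apply: (@mulIf _ (3 * K + t)); first by apply/eqP => h'; lra.
  rewrite mulrAC -mulrA divff ?mulr1; first lra.
  by apply/eqP => h'; lra.
exfalso; nra.
Qed.

Lemma ord3P (i : 'I_3) : i = 0 \/ i = 1 \/ i = 2.
Proof.
case: i => [[|[|[|n]]] H]; [left|right;left|right;right|by []]; exact/val_inj.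
Qed.

Lemma sum3 (f : 'I_3 -> R) : \sum_j f j = f 0 + f 1 + f 2.
Proof.
rewrite !big_ord_recl big_ord0 addr0 addrA; congr (f _ + f _ + f _); exact/val_inj.
Qed.

Lemma A4E (K : R) : [/\ A4 K 0 0 = 1, A4 K 0 1 = K & A4 K 0 2 = K] /\
  [/\ A4 K 1 0 = K, A4 K 1 1 = 1 & A4 K 1 2 = 1 ] /\
  [/\ A4 K 2 0 = K, A4 K 2 1 = 1 & A4 K 2 2 = 1].
Proof. by rewrite !mxE. Qed.

Lemma abcE (a b c : R) : [/\ abc_mx a b c 0 0 = a, abc_mx a b c 0 1 = b & abc_mx a b c 0 2 = b] /\
  [/\ abc_mx a b c 1 0 = b, abc_mx a b c 1 1 = c & abc_mx a b c 1 2 = c ] /\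
  [/\ abc_mx a b c 2 0 = b, abc_mx a b c 2 1 = c & abc_mx a b c 2 2 = c].
Proof. by rewrite !mxE. Qed.

Lemma sink_uniq (K : R) S : 0 < K -> K != 1 -> is_sinkhorn_limit (A4 K) S ->
  S = abc_mx (a_K K) (b_K K) (c_K K).
Proof.
move=> K0 K1 [[S0 [Srow Scol]] [x [y [xp [yp E]]]]].
have hS i j : S i j = x 0 i * A4 K i j * y 0 j.
  by rewrite E mul_diag_mx mul_mx_diag !mxE.
have [[a00 a01 a02] [[a10 a11 a12] [a20 a21 a22]]] := A4E K.
have r0 := Srow 0; have r1 := Srow 1; have r2 := Srow 2.
have c0 := Scol 0; have c1 := Scol 1; have c2 := Scol 2.
rewrite sum3 !hS a00 a01 a02 in r0. rewrite sum3 !hS a10 a11 a12 in r1.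
rewrite sum3 !hS a20 a21 a22 in r2. rewrite sum3 !hS a00 a10 a20 in c0.
rewrite sum3 !hS a01 a11 a21 in c1. rewrite sum3 !hS a02 a12 a22 in c2.
have [x0p x1p x2p] := And3 (xp 0) (xp 1) (xp 2).
have [y0p y1p y2p] := And3 (yp 0) (yp 1) (yp 2).
have ex : x 0 1 = x 0 2.
  have F0 : K * y 0 0 + y 0 1 + y 0 2 != 0 by apply/eqP => h; nra.
  have e1 : x 0 1 * (K * y 0 0 + y 0 1 + y 0 2) = 1 by rewrite -r1; ring.
  have e2 : x 0 2 * (K * y 0 0 + y 0 1 + y 0 2) = 1 by rewrite -r2; ring.
  by apply: (mulIf F0); rewrite e1 e2.
have ey : y 0 1 = y 0 2.
  have F0 : K * x 0 0 + x 0 1 + x 0 2 != 0 by apply/eqP => h; nra.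
  have e1 : y 0 1 * (K * x 0 0 + x 0 1 + x 0 2) = 1 by rewrite -c1; ring.
  have e2 : y 0 2 * (K * x 0 0 + x 0 1 + x 0 2) = 1 by rewrite -c2; ring.
  by apply: (mulIf F0); rewrite e1 e2.
rewrite -ex -ey in r0 r1 c0 c1.
set b := K * x 0 0 * y 0 1.
have eb : K * x 0 1 * y 0 0 = b by rewrite /b; lra.
have e00 : x 0 0 * y 0 0 = 1 - 2 * b by rewrite /b; lra.
have e11 : x 0 1 * y 0 1 = (1 - b) / 2 by lra.
have hq : K ^+ 2 * ((1 - 2 * b) * (1 - b)) = 2 * b ^+ 2.
  have -> : 1 - b = 2 * ((1 - b) / 2) by field.
  rewrite -e00 -e11 [in RHS]expr2 -{1}eb /b; ring.
have b0 : 0 < b by rewrite /b !mulr_gt0.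
have b1 : b < 2^-1.
  have : 0 < x 0 0 * y 0 0 by rewrite mulr_gt0.
  rewrite e00; lra.
have bb := quad_uniq K b K0 b0 b1 hq.
have [ha hb hc] := abc_beta K K0 K1.
rewrite ha hb hc -bb.
have [[b00 b01 b02] [[b10 b11 b12] [b20 b21 b22]]] := abcE (1 - 2 * b) b ((1 - b) / 2).
apply/matrixP => i j.
case: (ord3P i) => [->|[->|->]]; case: (ord3P j) => [->|[->|->]];
  rewrite ?b00 ?b01 ?b02 ?b10 ?b11 ?b12 ?b20 ?b21 ?b22 hS
          ?a00 ?a01 ?a02 ?a10 ?a11 ?a12 ?a20 ?a21 ?a22 -?ex -?ey; lra.
Qed.

Lemma sink_exist (K : R) : 0 < K -> K != 1 ->
  is_sinkhorn_limit (A4 K) (abc_mx (a_K K) (b_K K) (c_K K)).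
Proof.
move=> K0 K1.
have [ha hb hc] := abc_beta K K0 K1.
have [b0 b1] := beta_bounds K K0.
have hq := beta_quad K K0.
rewrite ha hb hc; set b := beta K in b0 b1 hq *.
have [[b00 b01 b02] [[b10 b11 b12] [b20 b21 b22]]] := abcE (1 - 2 * b) b ((1 - b) / 2).
have [[a00 a01 a02] [[a10 a11 a12] [a20 a21 a22]]] := A4E K.
have Kn : K != 0 by apply/eqP => h; lra.
have an : 1 - 2 * b != 0 by apply/eqP => h; lra.
have hc' : (1 - b) / 2 = b ^+ 2 / (K ^+ 2 * (1 - 2 * b)).
  apply/eqP; rewrite eqr_div ?mulf_neq0 ?expf_neq0 //; apply/eqP; rewrite [_ * 2]mulrC -hq; ring.
split.
  split.
    move=> i j; case: (ord3P i) => [->|[->|->]]; case: (ord3P j) => [->|[->|->]];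
      rewrite ?b00 ?b01 ?b02 ?b10 ?b11 ?b12 ?b20 ?b21 ?b22; lra.
  split.
    move=> i; rewrite sum3; case: (ord3P i) => [->|[->|->]];
      rewrite ?b00 ?b01 ?b02 ?b10 ?b11 ?b12 ?b20 ?b21 ?b22; lra.
  move=> j; rewrite sum3; case: (ord3P j) => [->|[->|->]];
    rewrite ?b00 ?b01 ?b02 ?b10 ?b11 ?b12 ?b20 ?b21 ?b22; lra.
exists (\row_(j < 3) (if (j == 0 :> nat) then 1 - 2 * b else b / K)).
exists (\row_(j < 3) (if (j == 0 :> nat) then 1 else b / (K * (1 - 2 * b)))).
split.
  move=> i; rewrite mxE; case: ifP => _; [lra| by rewrite divr_gt0].
split.
  move=> i; rewrite mxE; case: ifP => _; [lra| by rewrite divr_gt0 // mulr_gt0 //; lra].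
apply/matrixP => i j; rewrite mul_diag_mx mul_mx_diag !mxE.
case: (ord3P i) => [->|[->|->]]; case: (ord3P j) => [->|[->|->]];
  rewrite ?b00 ?b01 ?b02 ?b10 ?b11 ?b12 ?b20 ?b21 ?b22
          ?a00 ?a01 ?a02 ?a10 ?a11 ?a12 ?a20 ?a21 ?a22 /= ?hc'; field; by rewrite ?Kn ?an.
Qed.

Lemma abc_lin (a b c a' b' c' k : R) :
  abc_mx a b c + k *: abc_mx a' b' c' = abc_mx (a + k * a') (b + k * b') (c + k * c').
Proof. apply/matrixP => i j; rewrite !mxE; by case: (nat_of_ord i == 0)%N; case: (nat_of_ord j == 0)%N. Qed.

Lemma beta_cvg : (beta K @[K --> +oo] --> (2^-1 : R))%classic.
Proof.
apply/cvgrPdist_lt => e e0.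
near=> K.
have K1 : 1 < K by near: K; apply: nbhs_pinfty_gt; rewrite num_real.
have Ke : e^-1 < K by near: K; apply: nbhs_pinfty_gt; rewrite num_real.
have K0 : 0 < K by lra.
have eK : 1 < e * K.
  have ee : e * e^-1 = 1 by rewrite divff // gt_eqF.
  nra.
have t2 := tK_sq K; have t0 := tK_gt0 K; have hb := beta_eq K K0.
set t := tK K in t2 t0 hb; set u := 2^-1 - beta K.
have tK : K < t by nra.
have hu : u * (2 * (3 * K + t)) = t - K by rewrite /u; lra.
have h1 : (t - K) * (t + K) = 8.
  have -> : (t - K) * (t + K) = t ^+ 2 - K ^+ 2 by ring.
  by rewrite t2; ring.
have u0 : 0 <= u.
  have : 0 < u * (2 * (3 * K + t)) by rewrite hu; lra.
  rewrite pmulr_lgt0; [lra|lra].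
have h2 : 2 * K * (t - K) <= 8 by nra.
have h3 : u * K * (2 * (3 * K + t)) <= 4 by rewrite mulrAC hu; lra.
have h4 : u * K <= 2^-1 by nra.
rewrite ger0_norm //; nra.
Unshelve. all: by end_near.
Qed.
End S.
Arguments beta {R}. Arguments tK {R}. Arguments sink_uniq {R}. Arguments sink_exist {R}. Arguments abc_beta {R}. Arguments beta_cvg {R}.

Theorem mainTheorem9 (R : realType) :
  (forall K : R, 0 < K -> K != 1 ->
     forall S : 'M[R]_3,
       is_sinkhorn_limit (A4 K) S <-> S = abc_mx (a_K K) (b_K K) (c_K K)) /\
  (forall f : R -> 'M[R]_3,
     (forall K : R, 1 < K -> is_sinkhorn_limit (A4 K) (f K)) ->
     (f K @[K --> +oo] --> abc_mx 0 (2^-1) (4^-1))%classic).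
Proof.
split.
  move=> K K0 K1 S; split; first exact: (sink_uniq K S K0 K1).
  by move=> ->; exact: (sink_exist K K0 K1).
move=> f hf.
pose C0 : 'M[R]_3 := abc_mx 1 0 (2^-1).
pose C1 : 'M[R]_3 := abc_mx (-2) 1 (- 2^-1).
have hg : ((fun K => C0 + beta K *: C1) @ +oo --> abc_mx 0 (2^-1) (4^-1))%classic.
  have -> : abc_mx 0 (2^-1) (4^-1) = C0 + (2^-1 : R) *: C1.
    by rewrite /C0 /C1 abc_lin; congr abc_mx; field.
  have h1 : (beta x *: C1 @[x --> +oo] --> (2^-1 : R) *: C1)%classic.
    by apply: cvgZr_tmp; exact: beta_cvg.
  have h2 := @cvgD _ _ _ (+oo%classic) _ (fun=> C0) (fun x => beta x *: C1) C0 ((2^-1 : R) *: C1) (cvg_cst C0) h1.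
  exact (h2 _ _).
apply: cvg_trans hg; apply: near_eq_cvg.
near=> K.
have K1 : 1 < K by near: K; apply: nbhs_pinfty_gt; rewrite num_real.
have K0 : 0 < K by lra.
have K1' : K != 1 by rewrite gt_eqF.
rewrite (sink_uniq K _ K0 K1' (hf K K1)).
have [ha hb hc] := abc_beta K K0 K1'.
rewrite /C0 /C1 abc_lin ha hb hc; congr abc_mx; field.
Unshelve. all: by end_near.
Qed.
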